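(* Let $G$ be a topological group. (i) Let $X$ be a discrete space with a continuous $G$-action and $c:G\times X\to\mathbf S^1$ a continuous cocycle. Then the representation $\lambda_X^c$ of $G$ on $\ell_2(X)$ is unitarily equivalent to a direct sum of monomial representations $\mathrm{Ind}_H^G\chi$ associated to open subgroups $H$ of $G$ (and unitary characters $\chi$ of $H$). (ii) Let $\pi=\bigoplus_{i\in I}\mathrm{Ind}_{H_i}^G\chi_i$ be a direct sum of monomial representations associated to open subgroups $H_i$ of $G$ and unitary characters $\chi_i$ of $H_i$. Let $X=\coprod_{i\in I}G/H_i$ with the natural $G$-action. Then $\pi$ is unitarily equivalent to $\lambda_X^c$ for some cocycle $c:G\times X\to\mathbf S^1$.
   Context: An action of $G$ on a discrete space $X$ is continuous iff all point stabilizers are open. A cocycle $c:G\times X\to\mathbf S^1$ satisfies $c(g_1g_2,x)=c(g_1,g_2x)c(g_2,x)$ for all $g_1,g_2\in G$, $x\in X$. The twisted permutation representation $\lambda_X^c$ on $\ell_2(X)$ is $\lambda_X^c(g)f(x)=c(g^{-1},x)f(g^{-1}x)$. A monomial representation is an induced representation $\mathrm{Ind}_H^G\chi$ with $\chi:H\to\mathbf S^1$ a (continuous) unitary character. *)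

(* Defs.v *)
From HB Require Import structures.
From mathcomp Require Import all_boot all_order all_algebra.
From mathcomp Require Import all_classical all_reals all_analysis.
From mathcomp Require Export complex.
Set Implicit Arguments. Unset Strict Implicit. Unset Printing Implicit Defensive.
Import Order.TTheory GRing.Theory Num.Theory.
Import numFieldNormedType.Exports.
Local Open Scope classical_set_scope.
Local Open Scope ring_scope.

Section TopGroup.
Variable G : Type.
Variables (mul : G -> G -> G) (inv : G -> G) (one : G).

Definition is_group :=
  [/\ forall x y z, mul x (mul y z) = mul (mul x y) z,
      forall x, mul one x = x, forall x, mul x one = x,
      forall x, mul (inv x) x = one & forall x, mul x (inv x) = one].

Definition is_subgroup (H : set G) :=
  [/\ H one, forall x y, H x -> H y -> H (mul x y) & forall x, H x -> H (inv x)].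

Definition lcoset (g : G) (H : set G) : set G := [set mul g h | h in H].

Definition lcosets (H : set G) : Type := {C : set G | exists g, C = lcoset g H}.

Definition lcoset_rep (H : set G) (C : lcosets H) : G := projT1 (cid (proj2_sig C)).

(* natural (left translation) action of G on G/H; under the group axioms the
   first branch is always taken *)
Definition lcoset_move (H : set G) (g : G) (C : lcosets H) : lcosets H :=
  match pselect (exists g', lcoset g (proj1_sig C) = lcoset g' H) with
  | left p => exist _ (lcoset g (proj1_sig C)) p
  | right _ => C
  end.

Definition cosets_sum (I : Type) (H : I -> set G) : Type :=
  {i : I & lcosets (H i)}.

Definition cosets_sum_act (I : Type) (H : I -> set G) (g : G)
  (q : cosets_sum H) : cosets_sum H :=
  existT _ (projT1 q) (lcoset_move g (projT2 q)).

Definition is_action (X : Type) (act : G -> X -> X) :=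
  (forall x, act one x = x) /\ (forall g1 g2 x, act (mul g1 g2) x = act g1 (act g2 x)).
End TopGroup.

Definition is_topological_group (G : topologicalType)
  (mul : G -> G -> G) (inv : G -> G) (one : G) :=
  [/\ is_group mul inv one,
      continuous (fun p : G * G => mul p.1 p.2) & continuous inv].

Definition open_subgroup (G : topologicalType)
  (mul : G -> G -> G) (inv : G -> G) (one : G) (H : set G) :=
  is_subgroup mul inv one H /\ open H.

Section Complex.
Variable R : realType.

Definition nsq (z : R[i]) : R := Normc.normc z ^+ 2.

Definition in_S1 (z : R[i]) : Prop := Normc.normc z = 1.

(* continuity of a C-valued map (C carries the product topology of R x R) *)
Definition continuousC (T : topologicalType) (f : T -> R[i]) :=
  continuous (fun t => complex.Re (f t) : R) /\ continuous (fun t => complex.Im (f t) : R).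

Definition continuousC_within (T : topologicalType) (A : set T) (f : T -> R[i]) :=
  {within A, continuous (fun t => complex.Re (f t) : R)} /\
  {within A, continuous (fun t => complex.Im (f t) : R)}.

Definition unitary_character (G : topologicalType) (mul : G -> G -> G)
  (H : set G) (chi : G -> R[i]) :=
  [/\ forall h, H h -> in_S1 (chi h),
      forall h k, H h -> H k -> chi (mul h k) = chi h * chi k &
      continuousC_within H chi].

Definition continuous_action (G : topologicalType) (mul : G -> G -> G) (one : G)
  (X : discreteTopologicalType) (act : G -> X -> X) :=
  is_action mul one act /\ continuous (fun p : G * X => act p.1 p.2).

Definition cocycle (G X : Type) (mul : G -> G -> G) (act : G -> X -> X)
  (c : G -> X -> R[i]) :=
  (forall g x, in_S1 (c g x)) /\
  (forall g1 g2 x, c (mul g1 g2) x = c g1 (act g2 x) * c g2 x).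

Definition continuous_cocycle (G : topologicalType) (X : discreteTopologicalType)
  (mul : G -> G -> G) (act : G -> X -> X) (c : G -> X -> R[i]) :=
  cocycle mul act c /\ continuousC (fun p : G * X => c p.1 p.2).

Definition l2_nsq (X : Type) (f : X -> R[i]) : \bar R :=
  \esum_(x in [set: {classic X}]) (nsq (f x))%:E.

Definition l2_space (X : Type) : set (X -> R[i]) :=
  [set f | (l2_nsq f < +oo)%E].

Definition lambda_rep (G X : Type) (inv : G -> G) (act : G -> X -> X)
  (c : G -> X -> R[i]) (g : G) (f : X -> R[i]) : X -> R[i] :=
  fun x => c (inv g) x * f (act (inv g) x).

(* The Hilbert direct sum (+)_{i in I} Ind_{H_i}^G chi_i is realised as the space
   of functions F on the disjoint union {i : I & G} such that
   F(i, g h) = chi_i(h)^-1 F(i, g) for h in H_i, with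
   sum_i sum_{gH_i in G/H_i} |F(i, g)|^2 < oo; G acts by left translation. *)
Definition ind_space (G : Type) (mul : G -> G -> G) (I : Type) (H : I -> set G)
  (chi : I -> G -> R[i]) : set ({i : I & G} -> R[i]) :=
  [set F | (forall i g h, H i h ->
              F (existT _ i (mul g h)) = (chi i h)^-1 * F (existT _ i g)) /\
           (\esum_(q in [set: {classic cosets_sum mul H}])
              (nsq (F (existT _ (projT1 q) (lcoset_rep (projT2 q)))))%:E < +oo)%E].

Definition ind_nsq (G : Type) (mul : G -> G -> G) (I : Type) (H : I -> set G)
  (F : {i : I & G} -> R[i]) : \bar R :=
  \esum_(q in [set: {classic cosets_sum mul H}])
     (nsq (F (existT _ (projT1 q) (lcoset_rep (projT2 q)))))%:E.

Definition ind_act (G : Type) (mul : G -> G -> G) (inv : G -> G) (I : Type)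
  (g : G) (F : {i : I & G} -> R[i]) : {i : I & G} -> R[i] :=
  fun p => F (existT _ (projT1 p) (mul (inv g) (projT2 p))).

Definition unitarily_equivalent (G T1 T2 : Type)
  (S1 : set (T1 -> R[i])) (N1 : (T1 -> R[i]) -> \bar R)
  (rho1 : G -> (T1 -> R[i]) -> (T1 -> R[i]))
  (S2 : set (T2 -> R[i])) (N2 : (T2 -> R[i]) -> \bar R)
  (rho2 : G -> (T2 -> R[i]) -> (T2 -> R[i])) :=
  exists U : (T1 -> R[i]) -> (T2 -> R[i]),
    [/\ forall v, S1 v -> S2 (U v),
        forall v, S1 v -> N2 (U v) = N1 v,
        forall a v w, S1 v -> S1 w ->
          U (fun t => a * v t + w t) = (fun s => a * U v s + U w s),
        forall w, S2 w -> exists2 v, S1 v & U v = w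
      & forall g v, S1 v -> U (rho1 g v) = rho2 g (U v)].
End Complex.

(* Main.v *)
Require Import Defs.
From HB Require Import structures.
From mathcomp Require Import all_boot all_order all_algebra.
From mathcomp Require Import all_classical all_reals all_analysis.
From mathcomp Require Import complex ring.
Import Order.TTheory GRing.Theory Num.Theory.
Import numFieldNormedType.Exports.
Local Open Scope classical_set_scope.
Local Open Scope ring_scope.
Set Implicit Arguments. Unset Strict Implicit. Unset Printing Implicit Defensive.

Section GroupLemmas.
Variables (G : Type) (mul : G -> G -> G) (inv : G -> G) (one : G).
Hypothesis Hg : is_group mul inv one.

Lemma gA x y z : mul x (mul y z) = mul (mul x y) z. Proof. by case: Hg. Qed.
Lemma g1m x : mul one x = x. Proof. by case: Hg. Qed.
Lemma gm1 x : mul x one = x. Proof. by case: Hg. Qed.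
Lemma gVm x : mul (inv x) x = one. Proof. by case: Hg. Qed.
Lemma gmV x : mul x (inv x) = one. Proof. by case: Hg. Qed.
Lemma gKl x y : mul (inv x) (mul x y) = y. Proof. by rewrite gA gVm g1m. Qed.
Lemma gKr x y : mul x (mul (inv x) y) = y. Proof. by rewrite gA gmV g1m. Qed.
Lemma ginv_uniq x y : mul x y = one -> inv x = y.
Proof. by move=> e; rewrite -[inv x]gm1 -e gA gVm g1m. Qed.
Lemma ginvM x y : inv (mul x y) = mul (inv y) (inv x).
Proof. by apply: ginv_uniq; rewrite gA -[mul (mul x y) _]gA gmV gm1 gmV. Qed.
Lemma ginvK x : inv (inv x) = x.
Proof. by apply: ginv_uniq; rewrite gVm. Qed.
Lemma ginv1 : inv one = one.
Proof. by apply: ginv_uniq; rewrite gm1. Qed.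

Variable H : set G.
Hypothesis HH : is_subgroup mul inv one H.
Lemma H1 : H one. Proof. by case: HH. Qed.
Lemma HM x y : H x -> H y -> H (mul x y). Proof. by case: HH => _ ? _; auto. Qed.
Lemma HV x : H x -> H (inv x). Proof. by case: HH => _ _ ?; auto. Qed.

Lemma mem_lcoset g x : lcoset mul g H x <-> H (mul (inv g) x).
Proof.
split; first by case=> h Hh <-; rewrite gKl.
by move=> Hx; exists (mul (inv g) x) => //; rewrite gKr.
Qed.
Lemma lcoset_self g : lcoset mul g H g.
Proof. by apply/mem_lcoset; rewrite gVm; exact: H1. Qed.
Lemma lcoset_eqP a b : lcoset mul a H = lcoset mul b H <-> H (mul (inv a) b).
Proof.
split=> [e|Hab]; first by apply/mem_lcoset; rewrite e; exact: lcoset_self.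
apply/seteqP; split=> x /mem_lcoset Hx; apply/mem_lcoset.
  have Hba : H (mul (inv b) a) by rewrite -[a]ginvK -ginvM; exact: HV.
  by rewrite -(gKr a x) gA; apply: HM.
by rewrite -(gKr b x) gA; apply: HM.
Qed.
End GroupLemmas.

Section CosetLemmas.
Variables (G : Type) (mul : G -> G -> G) (inv : G -> G) (one : G).
Hypothesis Hg : is_group mul inv one.
Variable H : set G.
Hypothesis HH : is_subgroup mul inv one H.

Local Notation mv := (@lcoset_move _ mul H).

Lemma lcosets_eq (C C' : lcosets mul H) : proj1_sig C = proj1_sig C' -> C = C'.
Proof. by case: C => c pc; case: C' => c' pc' /= e; exact: eq_exist. Qed.

Lemma rep_spec (C : lcosets mul H) : proj1_sig C = lcoset mul (lcoset_rep C) H.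
Proof. by rewrite /lcoset_rep; case: cid. Qed.

Definition coset_of (g : G) : lcosets mul H :=
  exist _ (lcoset mul g H) (ex_intro _ g erefl).

Lemma coset_of_rep (C : lcosets mul H) : coset_of (lcoset_rep C) = C.
Proof. by apply: lcosets_eq; rewrite /= -rep_spec. Qed.

Lemma lcosetA g g' : lcoset mul g (lcoset mul g' H) = lcoset mul (mul g g') H.
Proof.
apply/seteqP; split=> x.
  by case=> y [h Hh <-] <-; exists h => //; rewrite (gA Hg).
by case=> h Hh <-; exists (mul g' h); [exists h|rewrite (gA Hg)].
Qed.

Lemma move_val g (C : lcosets mul H) :
  proj1_sig (mv g C) = lcoset mul g (proj1_sig C).
Proof.
rewrite /lcoset_move; case: pselect => //= -[].
by exists (mul g (lcoset_rep C)); rewrite rep_spec lcosetA.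
Qed.

Lemma moveM g1 g2 (C : lcosets mul H) :
  mv (mul g1 g2) C = mv g1 (mv g2 C).
Proof. by apply: lcosets_eq; rewrite !move_val rep_spec !lcosetA (gA Hg). Qed.

Lemma move1 (C : lcosets mul H) : mv one C = C.
Proof. by apply: lcosets_eq; rewrite move_val rep_spec lcosetA (g1m Hg). Qed.

Lemma rep_mem (C : lcosets mul H) g : proj1_sig C g -> H (mul (inv (lcoset_rep C)) g).
Proof. by rewrite rep_spec => /(mem_lcoset Hg H). Qed.

Lemma rep_self (C : lcosets mul H) : proj1_sig C (lcoset_rep C).
Proof. by rewrite rep_spec; exact: (lcoset_self Hg HH). Qed.

Lemma key_mem g (C : lcosets mul H) :
  H (mul (inv (lcoset_rep (mv g C))) (mul g (lcoset_rep C))).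
Proof. by apply: rep_mem; rewrite move_val; exists (lcoset_rep C) => //; exact: rep_self. Qed.

Lemma coset_of_eq g h : H h -> coset_of (mul g h) = coset_of g.
Proof.
move=> Hh; apply: lcosets_eq => /=; apply/(lcoset_eqP Hg HH).
rewrite (ginvM Hg) -(gA Hg) (gVm Hg) (gm1 Hg). exact: (@HV _ mul inv one H HH h Hh).
Qed.
End CosetLemmas.

Section ComplexLemmas.
Variable R : realType.
Implicit Types z w : R[i].

Lemma S1_neq0 z : in_S1 z -> z != 0.
Proof. by move=> h; apply/eqP => z0; move: h; rewrite /in_S1 z0 Normc.normc0 => /eqP; rewrite eq_sym oner_eq0. Qed.

Lemma S1_inv z : in_S1 z -> in_S1 z^-1.
Proof. by rewrite /in_S1 Normc.normcV => ->; rewrite invr1. Qed.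

Lemma S1_mul z w : in_S1 z -> in_S1 w -> in_S1 (z * w).
Proof. by rewrite /in_S1 Normc.normcM => -> ->; rewrite mulr1. Qed.

Lemma nsq_mulS1 z w : in_S1 z -> nsq (z * w) = nsq w.
Proof. by rewrite /nsq Normc.normcM => ->; rewrite mul1r. Qed.

Lemma S1_conjV z : in_S1 z -> (z^*)%C = z^-1.
Proof.
move=> h; have nz := S1_neq0 h.
apply: (mulfI nz); rewrite divrr ?unitfE //.
move: h; rewrite /in_S1; case: z nz => a b nz /= e.
have e2 : a ^+ 2 + b ^+ 2 = 1.
  by rewrite -(@sqr_sqrtr _ (a ^+ 2 + b ^+ 2)) ?e ?expr1n // addr_ge0 // sqr_ge0.
apply/eqP; rewrite eq_complex /= -e2; apply/andP; split; apply/eqP; ring.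
Qed.

Lemma S1_conj z : in_S1 z -> in_S1 (z^*)%C.
Proof. by move=> h; rewrite S1_conjV //; exact: S1_inv. Qed.
End ComplexLemmas.
Section Cont.
Variables (R : realType) (G : topologicalType) (X : discreteTopologicalType).
Lemma pairL_cont (x : X) : continuous (fun g : G => (g, x)).
Proof. by move=> g; apply: cvg_pair => //; exact: cvg_cst. Qed.

Lemma sliceL_cont (T : topologicalType) (F : G * X -> T) x :
  continuous F -> continuous (fun g => F (g, x)).
Proof. move=> hF g; have := continuous_comp (@pairL_cont x g) (hF _). by []. Qed.

Lemma stab_open (act : G -> X -> X) x :
  continuous (fun p : G * X => act p.1 p.2) -> open [set g | act g x = x].
Proof.
move=> hc; have hs := sliceL_cont (x:=x) hc.
rewrite (_ : [set g | act g x = x] = (fun g => act g x) @^-1` [set x]) //.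
by apply: open_comp => [g _|]; [exact: hs|exact: discrete_open].
Qed.

Lemma conj_cont_within (A : set G) (f : G -> R[i]) :
  continuous (fun g => complex.Re (f g)) -> continuous (fun g => complex.Im (f g)) ->
  continuousC_within A (fun g => (f g)^*%C).
Proof.
move=> hr hi; split; apply: continuous_subspaceT.
  by move=> g; rewrite (_ : (fun t => _) = (fun g => complex.Re (f g))); [exact: hr|apply: funext => t; case: (f t)].
move=> g; rewrite (_ : (fun t => _) = (fun g => - complex.Im (f g))); last by apply: funext => t; case: (f t).
exact: (continuousN (hi g)).
Qed.
End Cont.

Lemma xget_indep (T : choiceType) (a b : T) (P : set T) :
  (exists x, P x) -> xget a P = xget b P.
Proof.
move=> [x Px]; rewrite /xget; case: pselect => // nP.
by exfalso; apply: nP; exists x; exact/asboolP.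
Qed.

Section Part1.
Variables (R : realType) (G : topologicalType) (mul : G -> G -> G) (inv : G -> G) (one : G).
Hypothesis Hg : is_group mul inv one.
Variables (X : discreteTopologicalType) (act : G -> X -> X) (c : G -> X -> R[i]).
Hypothesis Hact : continuous_action mul one act.
Hypothesis Hc : continuous_cocycle mul act c.

Lemma act1 x : act one x = x. Proof. by case: Hact => -[]. Qed.
Lemma actM g h x : act (mul g h) x = act g (act h x). Proof. by case: Hact => -[]. Qed.
Lemma actK g x : act (inv g) (act g x) = x.
Proof. by rewrite -actM (gVm Hg) act1. Qed.
Lemma actKV g x : act g (act (inv g) x) = x.
Proof. by rewrite -actM (gmV Hg) act1. Qed.
Lemma cS1 g x : in_S1 (c g x). Proof. by case: Hc => -[]. Qed.
Lemma cM g h x : c (mul g h) x = c g (act h x) * c h x. Proof. by case: Hc => -[]. Qed.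

Definition orb (x : X) : set X := [set y | exists g, act g x = y].
Lemma orb_self x : orb x x. Proof. by exists one; rewrite act1. Qed.
Lemma orb_eq x y : orb x y -> orb y = orb x.
Proof.
case=> g <-; apply/seteqP; split=> z [h <-].
  by exists (mul h g); rewrite actM.
by exists (mul h (inv g)); rewrite actM actK.
Qed.

Definition rr (x : X) : X := xget x (orb x).
Lemma rr_orb x : orb x (rr x). Proof. exact: (xgetI x (orb_self x)). Qed.
Lemma rr_eq x y : orb x y -> rr y = rr x.
Proof. by move=> h; rewrite /rr (orb_eq h); apply: xget_indep; exists x; exact: orb_self. Qed.
Lemma rr_idem x : rr (rr x) = rr x. Proof. exact: rr_eq (rr_orb x). Qed.

Definition I1 := {x : X | rr x = x}.
Definition idx (x : X) : I1 := exist _ (rr x) (rr_idem x).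

Definition tt (x : X) : G := inv (projT1 (cid (rr_orb x))).
Lemma tt_spec x : act (tt x) (rr x) = x.
Proof. by rewrite /tt; case: cid => g /= <-; rewrite actK. Qed.

Definition Hst (i : I1) : set G := [set g | act g (proj1_sig i) = proj1_sig i].
Definition chi1 (i : I1) (h : G) : R[i] := ((c h (proj1_sig i))^*)%C.

Lemma Hst_sub i : is_subgroup mul inv one (Hst i).
Proof.
split; rewrite /Hst /=.
- exact: act1.
- by move=> g h hg hh; rewrite actM hh hg.
- by move=> g hg; rewrite -{1}hg actK.
Qed.

Lemma Hst_open i : open_subgroup mul inv one (Hst i).
Proof. split; first exact: Hst_sub. by apply: stab_open; case: Hact. Qed.

Lemma chi1_char i : unitary_character mul (Hst i) (chi1 i).
Proof.
split.
- by move=> h _; apply: S1_conj; exact: cS1.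
- by move=> h k _ hk; rewrite /chi1 cM hk rmorphM.
- case: Hc => _ [hr hi]; apply: conj_cont_within.
    exact: (sliceL_cont (x:=proj1_sig i) hr).
  exact: (sliceL_cont (x:=proj1_sig i) hi).
Qed.

Local Notation Q := (cosets_sum mul Hst).

Definition phi (q : Q) : X := act (lcoset_rep (projT2 q)) (proj1_sig (projT1 q)).
Definition psi (x : X) : Q := existT _ (idx x) (coset_of mul (Hst (idx x)) (tt x)).

Lemma coset_rep_mem (i : I1) g : Hst i (mul (inv g) (lcoset_rep (coset_of mul (Hst i) g))).
Proof.
apply/(lcoset_eqP Hg (Hst_sub i)).
by rewrite -rep_spec.
Qed.

Lemma idx_eq (i : I1) y : rr y = proj1_sig i -> idx y = i.
Proof. by case: i => x px /= e; exact: eq_exist. Qed.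

Lemma phi_psi x : phi (psi x) = x.
Proof.
rewrite /phi /psi /=.
have := coset_rep_mem (idx x) (tt x).
set s := lcoset_rep _; rewrite /Hst /= => hs.
by rewrite -(gKr Hg (tt x) s) actM hs tt_spec.
Qed.

Lemma psi_phi q : psi (phi q) = q.
Proof.
case: q => i C; rewrite /psi /phi /=.
set s := lcoset_rep C; set y := act s (proj1_sig i).
have ry : rr y = proj1_sig i.
  rewrite (@rr_eq (proj1_sig i) y); last by exists s.
  exact: (proj2_sig i).
have -> : idx y = i by apply: idx_eq.
congr existT; apply: lcosets_eq => /=; rewrite (rep_spec C); apply/(lcoset_eqP Hg (Hst_sub i)).
rewrite /Hst /= actM -/s -/y -ry.
by rewrite -[w in act _ w](tt_spec y) actK.
Qed.

Definition VV (f : X -> R[i]) : {i : I1 & G} -> R[i] :=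
  fun p => c (projT2 p) (proj1_sig (projT1 p)) * f (act (projT2 p) (proj1_sig (projT1 p))).

Lemma vv_norm f : @ind_nsq R G mul I1 Hst (VV f) = @l2_nsq R X f.
Proof.
rewrite /ind_nsq /l2_nsq.
transitivity (\esum_(q in [set: {classic Q}]) (nsq (f (phi q)))%:E).
  by apply: eq_esum => q _; rewrite /VV nsq_mulS1 //; exact: cS1.
symmetry; apply: reindex_esum; rewrite setTT_bijective.
by exists psi; [exact: psi_phi|exact: phi_psi].
Qed.

Lemma vv_equiv f i g h : Hst i h ->
  VV f (existT _ i (mul g h)) = (chi1 i h)^-1 * VV f (existT _ i g).
Proof.
rewrite /Hst /VV /chi1 /= => hh.
by rewrite cM actM hh (S1_conjV (cS1 h _)) invrK; ring.
Qed.

Lemma vv_ind f : l2_space f -> ind_space mul Hst chi1 (VV f).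
Proof.
move=> hf; split; first by move=> i g h; exact: vv_equiv.
by move: (vv_norm f); rewrite /ind_nsq => ->; exact: hf.
Qed.

Lemma vv_intertwine g f :
  VV (lambda_rep inv act c g f) = ind_act mul inv g (VV f).
Proof.
apply: funext => -[i y]; rewrite /VV /lambda_rep /ind_act /=.
by rewrite cM actM; ring.
Qed.

Definition ff (F : {i : I1 & G} -> R[i]) (x : X) : R[i] :=
  ((c (tt x) (rr x))^*)%C * F (existT _ (idx x) (tt x)).

Lemma vv_ff F : ind_space mul Hst chi1 F -> VV (ff F) = F.
Proof.
case=> HF _; apply: funext => -[i y]; rewrite /VV /ff /=.
set z := act y (proj1_sig i).
have ry : rr z = proj1_sig i.
  rewrite (@rr_eq (proj1_sig i) z); last by exists y.
  exact: (proj2_sig i).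
rewrite (idx_eq ry) ry.
set k := mul (inv (tt z)) y.
have tz : act (tt z) (proj1_sig i) = z by rewrite -ry tt_spec.
have hk : Hst i k by rewrite /Hst /= /k actM -/z -[w in act _ w]tz actK.
have eF := HF i (tt z) k hk; rewrite /k (gKr Hg) in eF.
have ec : c (mul (tt z) k) (proj1_sig i) = c (tt z) (proj1_sig i) * c k (proj1_sig i).
  by rewrite cM hk.
rewrite /k (gKr Hg) in ec.
rewrite eF ec /chi1 (S1_conjV (cS1 k _)) (S1_conjV (cS1 (tt z) _)) invrK.
have nz := S1_neq0 (cS1 (tt z) (proj1_sig i)).
by field.
Qed.

Lemma ff_l2 F : ind_space mul Hst chi1 F -> l2_space (ff F).
Proof.
move=> hF; rewrite /l2_space /= -vv_norm vv_ff //.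
by case: hF.
Qed.

Lemma part1_main : exists (I : Type) (H : I -> set G) (chi : I -> G -> R[i]),
       [/\ forall i, open_subgroup mul inv one (H i),
           forall i, unitary_character mul (H i) (chi i) &
           unitarily_equivalent
             (@l2_space R X) (@l2_nsq R X) (lambda_rep inv act c)
             (ind_space mul H chi) (@ind_nsq R G mul I H) (@ind_act R G mul inv I)].
Proof.
exists I1, Hst, chi1; split.
- exact: Hst_open.
- exact: chi1_char.
exists VV; split.
- exact: vv_ind.
- by move=> v _; exact: vv_norm.
- by move=> a v w _ _; apply: funext => p; rewrite /VV /=; ring.
- by move=> w hw; exists (ff w); [exact: ff_l2|exact: vv_ff].
- by move=> g v _; exact: vv_intertwine.
Qed.
End Part1.

Section Part2.
Variables (R : realType) (G : topologicalType) (mul : G -> G -> G) (inv : G -> G) (one : G).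
Hypothesis Hg : is_group mul inv one.
Variables (I : Type) (H : I -> set G) (chi : I -> G -> R[i]).
Hypothesis HH : forall i, is_subgroup mul inv one (H i).
Hypothesis Hchi : forall i, unitary_character mul (H i) (chi i).

Local Notation X := (cosets_sum mul H).
Local Notation act := (@cosets_sum_act G mul I H).

Lemma chiS1 i h : H i h -> in_S1 (chi i h).
Proof. by case: (Hchi i) => + _ _; apply. Qed.
Lemma chiM i h k : H i h -> H i k -> chi i (mul h k) = chi i h * chi i k.
Proof. by case: (Hchi i) => _ + _; apply. Qed.
Lemma chi_one i : chi i one = 1.
Proof.
have H1i := H1 (HH i).
have nz := S1_neq0 (chiS1 H1i).
apply: (mulfI nz); rewrite mulr1 -chiM // (g1m Hg) //.
Qed.

Definition srep (q : X) : G := lcoset_rep (projT2 q).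

Definition cc (g : G) (q : X) : R[i] :=
  (chi (projT1 q) (mul (inv (srep (act g q))) (mul g (srep q))))^-1.

Definition UU (F : {i : I & G} -> R[i]) : X -> R[i] :=
  fun q => F (existT _ (projT1 q) (srep q)).

Definition FF (f : X -> R[i]) : {i : I & G} -> R[i] :=
  fun p => (chi (projT1 p) (mul (inv (lcoset_rep (coset_of mul (H (projT1 p)) (projT2 p))))
                 (projT2 p)))^-1 * f (existT _ (projT1 p) (coset_of mul (H (projT1 p)) (projT2 p))).

Lemma key2 g (q : X) : H (projT1 q) (mul (inv (srep (act g q))) (mul g (srep q))).
Proof. by case: q => i C; exact: (key_mem Hg (HH i)). Qed.

Lemma cc_cocycle : cocycle mul act cc.
Proof.
split=> [g q|g1 g2 [i C]]; first by apply: S1_inv; apply: chiS1; exact: key2.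
rewrite /cc /srep /= -invfM -chiM; last 2 first.
- exact: (key_mem Hg (HH i)).
- exact: (key_mem Hg (HH i)).
rewrite (moveM Hg) -!(gA Hg) (gKr Hg).
done.
Qed.

Lemma FF_rep f (q : X) : FF f (existT _ (projT1 q) (srep q)) = f q.
Proof.
case: q => i C; rewrite /FF /srep /= coset_of_rep (gVm Hg) chi_one invr1 mul1r //.
Qed.

Lemma UU_FF f : UU (FF f) = f.
Proof. by apply: funext => q; rewrite /UU FF_rep. Qed.

Lemma FF_equiv f i g h : H i h ->
  FF f (existT _ i (mul g h)) = (chi i h)^-1 * FF f (existT _ i g).
Proof.
move=> Hh; rewrite /FF /= (coset_of_eq Hg (HH i) g Hh).
have Hr : H i (mul (inv (lcoset_rep (coset_of mul (H i) g))) g).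
  by apply: (rep_mem Hg); exact: (lcoset_self Hg (HH i)).
rewrite (gA Hg) chiM // invfM; ring.
Qed.

Lemma FF_ind f : l2_space f -> ind_space mul H chi (FF f).
Proof.
move=> hf; split; first by move=> i g h Hh; exact: FF_equiv.
rewrite (_ : \esum_(q in _) _ = l2_nsq f) //; apply: eq_esum => q _.
by rewrite (FF_rep f q).
Qed.

Lemma UU_intertwine F g : ind_space mul H chi F ->
  UU (ind_act mul inv g F) = lambda_rep inv act cc g (UU F).
Proof.
case=> HF _; apply: funext => -[i C].
rewrite /UU /ind_act /lambda_rep /cc /srep /=.
have e := HF i (lcoset_rep (lcoset_move (inv g) C)) _ (key_mem Hg (HH i) (inv g) C).
by rewrite (gKr Hg) in e.
Qed.

Lemma part2_main : exists c : G -> cosets_sum mul H -> R[i],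
       cocycle mul (@cosets_sum_act G mul I H) c /\
       unitarily_equivalent
         (ind_space mul H chi) (@ind_nsq R G mul I H) (@ind_act R G mul inv I)
         (@l2_space R (cosets_sum mul H)) (@l2_nsq R (cosets_sum mul H))
         (lambda_rep inv (@cosets_sum_act G mul I H) c).
Proof.
exists cc; split; first exact: cc_cocycle.
exists UU; split.
- by move=> v [_ hv].
- by [].
- by [].
- by move=> w hw; exists (FF w); [exact: FF_ind|exact: UU_FF].
- by move=> g v hv; exact: UU_intertwine.
Qed.
End Part2.

Theorem corollary2p3 (R : realType) (G : topologicalType)
  (mul : G -> G -> G) (inv : G -> G) (one : G) :
  is_topological_group mul inv one ->
  (* (i) *)
  (forall (X : discreteTopologicalType) (act : G -> X -> X) (c : G -> X -> R[i]),
     continuous_action mul one act ->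
     continuous_cocycle mul act c ->
     exists (I : Type) (H : I -> set G) (chi : I -> G -> R[i]),
       [/\ forall i, open_subgroup mul inv one (H i),
           forall i, unitary_character mul (H i) (chi i) &
           unitarily_equivalent
             (@l2_space R X) (@l2_nsq R X) (lambda_rep inv act c)
             (ind_space mul H chi) (@ind_nsq R G mul I H) (@ind_act R G mul inv I)]) /\
  (* (ii) *)
  (forall (I : Type) (H : I -> set G) (chi : I -> G -> R[i]),
     (forall i, open_subgroup mul inv one (H i)) ->
     (forall i, unitary_character mul (H i) (chi i)) ->
     exists c : G -> cosets_sum mul H -> R[i],
       cocycle mul (@cosets_sum_act G mul I H) c /\
       unitarily_equivalent
         (ind_space mul H chi) (@ind_nsq R G mul I H) (@ind_act R G mul inv I)
         (@l2_space R (cosets_sum mul H)) (@l2_nsq R (cosets_sum mul H))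
         (lambda_rep inv (@cosets_sum_act G mul I H) c)).
Proof.
case=> Hg _ _; split.
- by move=> X act c Hact Hc; exact: (part1_main Hg Hact Hc).
- by move=> I H chi HH Hchi; exact: (part2_main Hg (fun i => (HH i).1) Hchi).
Qed.
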